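(* Let $(\Omega,\mathcal{A},\mathbb{P})$ be a probability space and $k\colon\Omega\times\mathbb{R}\times\mathbb{R}\to\mathbb{R}$ jointly measurable with $|k(\omega,s,t)|\le1$ almost surely, and define $K(s,t)=\mathbb{E}_\omega[k(\omega,s,t)]$, assumed continuous and positive definite. Let $\rho$ be a Borel probability measure on $Z=\mathbb{R}^d\times\mathbb{R}\times\mathbb{R}$ with compact support $S$. For $c\in L^2(\rho)$ set $$f_c(x)=\int_S c(a,b,t)K(\langle a,x\rangle+b,t)\,d\rho(a,b,t),\qquad x\in\mathbb{R}^d.$$ Then the subclass $H^{\mathrm{cont}}_\rho=\{f_c:c\in C(S)\}$ is dense in $H_\rho=\{f_c:c\in L^2(\rho)\}$ with respect to the uniform norm on any compact set $X\subset\mathbb{R}^d$. *)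

(* Defs.v *)
From HB Require Import structures.
From mathcomp Require Import all_boot all_order all_algebra.
From mathcomp Require Import all_classical all_reals all_analysis.
Set Implicit Arguments. Unset Strict Implicit. Unset Printing Implicit Defensive.
Import Order.TTheory GRing.Theory Num.Theory.
Import numFieldNormedType.Exports.
Local Open Scope classical_set_scope.
Local Open Scope ring_scope.

Definition Zsp (R : realType) (d : nat) := ('rV[R]_d * R * R)%type.

Definition BorelZ (R : realType) (d : nat) :=
  g_sigma_algebraType (@open (Zsp R d)).

Definition dotv (R : realType) (d : nat) (a x : 'rV[R]_d) : R :=
  \sum_(i < d) a ord0 i * x ord0 i.

Definition msupport (R : realType) (d : nat)
  (rho : {measure set (BorelZ R d) -> \bar R}) : set (Zsp R d) :=
  [set z | forall U : set (Zsp R d), open U -> U z -> (0 < rho U)%E].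

Definition L2 (R : realType) (d : nat)
  (rho : {measure set (BorelZ R d) -> \bar R}) (c : BorelZ R d -> R) : Prop :=
  measurable_fun setT c /\ (\int[rho]_z ((c z) ^+ 2)%:E < +oo)%E.

Definition pos_def_kernel (R : realType) (K : R -> R -> R) : Prop :=
  forall (n : nat) (s alpha : 'I_n -> R),
    0 <= \sum_(i < n) \sum_(j < n) alpha i * alpha j * K (s i) (s j).

Definition f_c (R : realType) (d : nat)
  (rho : {measure set (BorelZ R d) -> \bar R}) (K : R -> R -> R)
  (c : BorelZ R d -> R) (x : 'rV[R]_d) : R :=
  Rintegral rho (msupport rho)
    (fun z : BorelZ R d => c z * K (dotv z.1.1 x + z.1.2) z.2).

(* Main.v *)
Require Import Defs.
From HB Require Import structures.
From mathcomp Require Import all_boot all_order all_algebra.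
From mathcomp Require Import all_classical all_reals all_analysis.
From mathcomp Require Import ring lra measurable_realfun.
Import Order.TTheory GRing.Theory Num.Theory.
Import numFieldNormedType.Exports.
Local Open Scope classical_set_scope.
Local Open Scope ring_scope.
Set Implicit Arguments. Unset Strict Implicit.
Section core.
Context d (T : measurableType d) (R : realType) (mu : {measure set T -> \bar R}).
Variables (D : set T) (mD : measurable D) (muD : (mu D < +oo)%E).

Lemma bndP (f : T -> R) M : (forall x, D x -> `|f x| <= M) -> [bounded f x | x in D].
Proof.
move=> fM; exists M; split; first exact: num_real.
by move=> N NM x Dx; apply: le_trans (fM x Dx) (ltW NM).
Qed.

Lemma int_bnd (h : T -> R) M : measurable_fun D h -> (forall x, D x -> `|h x| <= M) ->
  mu.-integrable D (EFin \o h).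
Proof. by move=> mh hM; apply: measurable_bounded_integrable => //; exact: bndP hM. Qed.

Lemma int_cM (c h : T -> R) M : mu.-integrable D (EFin \o c) -> measurable_fun D h ->
  (forall x, D x -> `|h x| <= M) -> mu.-integrable D (EFin \o (fun z => c z * h z)).
Proof.
move=> ic mh hM; have := integrableMl mD ic mh (bndP hM).
by apply: eq_integrable => // z _ /=; rewrite EFinM.
Qed.

Lemma Rint_sum I (s : seq I) (h : I -> T -> R) :
  (forall i, mu.-integrable D (EFin \o h i)) ->
  \int[mu]_(z in D) (\sum_(i <- s) h i z) = \sum_(i <- s) \int[mu]_(z in D) h i z.
Proof.
move=> ih; elim: s => [|i s IH].
  rewrite big_nil; under eq_Rintegral do rewrite big_nil.
  by rewrite Rintegral_cst // mul0r.
rewrite big_cons; under eq_Rintegral do rewrite big_cons.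
rewrite RintegralD // ?IH //.
have := @integrable_sum _ _ _ mu D mD _ s xpredT (fun i z => (h i z)%:E) (fun i _ => ih i).
by apply: eq_integrable => // z _ /=; rewrite sumEFin.
Qed.

Lemma int_Z (f : T -> R) k : mu.-integrable D (EFin \o f) ->
  mu.-integrable D (EFin \o (fun z => k * f z)).
Proof.
move=> fi; have := integrableZl mD k fi.
by apply: eq_integrable => // z _ /=; rewrite EFinM.
Qed.

Lemma bnd_mul (p h : T -> R) M : (forall z, D z -> 0 <= p z <= 1) ->
  (forall z, D z -> `|h z| <= M) -> forall z, D z -> `|p z * h z| <= M.
Proof.
move=> p01 hM z Dz; have /andP[p0 p1] := p01 z Dz.
rewrite normrM ger0_norm //; apply: le_trans (hM z Dz).
by rewrite -[leRHS]mul1r ler_wpM2r.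
Qed.

Lemma piece (c psi g : T -> R) (v w Mg : R) :
  mu.-integrable D (EFin \o c) -> measurable_fun D psi -> measurable_fun D g ->
  (forall z, D z -> 0 <= psi z <= 1) -> (forall z, D z -> `|g z| <= Mg) -> 0 <= w ->
  (forall z, D z -> psi z * `|g z - v| <= w * psi z) ->
  `|\int[mu]_(z in D) (c z * psi z * g z) -
    (\int[mu]_(z in D) (c z * psi z)) / (\int[mu]_(z in D) psi z) *
      \int[mu]_(z in D) (psi z * g z)|
   <= 2 * w * \int[mu]_(z in D) (`|c z| * psi z).
Proof.
move=> ic mp mg p01 gM w0 pgv.
have mc : measurable_fun D c by apply/measurable_EFinP; case/integrableP: ic.
have mgv : measurable_fun D (fun z => g z - v) by apply: measurable_funB.
have gvM : forall z, D z -> `|g z - v| <= Mg + `|v|.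
  by move=> z Dz; apply: le_trans (ler_normB _ _) _; rewrite lerD2r gM.
have p1 : forall z, D z -> `|psi z| <= 1.
  by move=> z Dz; have /andP[a b] := p01 z Dz; rewrite ger0_norm.
have ip : mu.-integrable D (EFin \o psi) by apply: int_bnd mp p1.
have ipg : mu.-integrable D (EFin \o (fun z => psi z * g z)).
  by apply: int_bnd (bnd_mul p01 gM); apply: measurable_funM.
have ipgv : mu.-integrable D (EFin \o (fun z => psi z * (g z - v))).
  by apply: int_bnd (bnd_mul p01 gvM); apply: measurable_funM.
have icp : mu.-integrable D (EFin \o (fun z => c z * psi z)) by apply: int_cM ic mp p1.
have icpg : mu.-integrable D (EFin \o (fun z => c z * psi z * g z)).
  have := int_cM ic (measurable_funM mp mg) (bnd_mul p01 gM).
  by apply: eq_integrable => // z _ /=; rewrite mulrA.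
have icpgv : mu.-integrable D (EFin \o (fun z => c z * psi z * (g z - v))).
  have := int_cM ic (measurable_funM mp mgv) (bnd_mul p01 gvM).
  by apply: eq_integrable => // z _ /=; rewrite mulrA.
have iacp : mu.-integrable D (EFin \o (fun z => `|c z| * psi z)).
  exact: int_cM (integrable_norm ic) mp p1.
have Ige0 : 0 <= \int[mu]_(z in D) (`|c z| * psi z).
  by apply: Rintegral_ge0 => z Dz; have /andP[a _] := p01 z Dz; rewrite mulr_ge0.
set A := \int[mu]_(z in D) (c z * psi z).
set W := \int[mu]_(z in D) psi z.
have W0 : 0 <= W by apply: Rintegral_ge0 => z Dz; have /andP[] := p01 z Dz.
have [WE|Wn0] := eqVneq W 0.
  rewrite WE invr0 mulr0 mul0r subr0.
  suff -> : \int[mu]_(z in D) (c z * psi z * g z) = 0.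
    by rewrite normr0; apply: mulr_ge0 => //; apply: mulr_ge0.
  have IE : (\int[mu]_(z in D) (psi z)%:E = 0)%E.
    rewrite -[LHS]fineK; first by rewrite -/(Rintegral _ _ _) -/W WE.
    exact: integrable_fin_num.
  have mpE : measurable_fun D (EFin \o psi) by apply/measurable_EFinP.
  have ae0 : ae_eq mu D (EFin \o psi) (cst 0%E).
    apply/(ae_eq_integral_abs mu mD mpE); rewrite -IE.
    apply: eq_integral => z /[!inE] Dz /=.
    by have /andP[a _] := p01 z Dz; rewrite ger0_norm.
  have ae1 : ae_eq mu D (EFin \o (fun z => c z * psi z * g z)) (cst 0%E).
    apply: filterS ae0 => z /= H Dz; have := H Dz => -[->].
    by rewrite mulr0 mul0r.
  rewrite /Rintegral (ae_eq_integral (cst 0%E)) //.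
  - by rewrite integral0.
  - by apply/measurable_EFinP; apply: measurable_funM => //; apply: measurable_funM.
have Wgt0 : 0 < W by rewrite lt0r Wn0.
have e1 : \int[mu]_(z in D) (c z * psi z * g z) =
    \int[mu]_(z in D) (c z * psi z * (g z - v)) + v * A.
  rewrite /A -RintegralZl // -RintegralD //; last exact: int_Z.
  by apply: eq_Rintegral => z _; ring.
have e2 : \int[mu]_(z in D) (psi z * g z) =
    \int[mu]_(z in D) (psi z * (g z - v)) + v * W.
  rewrite /W -RintegralZl // -RintegralD //; last exact: int_Z.
  by apply: eq_Rintegral => z _; ring.
set X := \int[mu]_(z in D) (c z * psi z * (g z - v)) in e1.
set Y := \int[mu]_(z in D) (psi z * (g z - v)) in e2.
have -> : \int[mu]_(z in D) (c z * psi z * g z) - A / W * \int[mu]_(z in D) (psi z * g z)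
    = X - A / W * Y.
  by rewrite e1 e2; field.
have bX : `|X| <= w * \int[mu]_(z in D) (`|c z| * psi z).
  apply: le_trans (le_normr_Rintegral mD icpgv) _.
  rewrite -RintegralZl //; apply: le_Rintegral => //.
    by apply: integrable_norm.
    exact: int_Z.
  move=> z Dz; rewrite !normrM (ger0_norm (_ : 0 <= psi z)); last by have /andP[] := p01 z Dz.
  by rewrite -mulrA [leRHS]mulrCA ler_wpM2l // pgv.
have bY : `|Y| <= w * W.
  apply: le_trans (le_normr_Rintegral mD ipgv) _.
  rewrite /W -RintegralZl //; apply: le_Rintegral => //.
    by apply: integrable_norm.
    exact: int_Z.
  move=> z Dz; rewrite !normrM (ger0_norm (_ : 0 <= psi z)); last by have /andP[] := p01 z Dz.
  exact: pgv.
have bA : `|A| <= \int[mu]_(z in D) (`|c z| * psi z).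
  apply: le_trans (le_normr_Rintegral mD icp) _.
  apply: le_Rintegral => //; first by apply: integrable_norm.
  move=> z Dz; rewrite !normrM (ger0_norm (_ : 0 <= psi z)) //; by have /andP[] := p01 z Dz.
apply: le_trans (ler_normB _ _) _.
rewrite !normrM normfV (ger0_norm W0).
have : `|A| / W * `|Y| <= `|A| / W * (w * W).
  by rewrite ler_wpM2l // divr_ge0.
have -> : `|A| / W * (w * W) = w * `|A| by field.
move=> h2.
have h3 : w * `|A| <= w * \int[mu]_(z in D) (`|c z| * psi z) by rewrite ler_wpM2l.
lra.
Qed.

Lemma core_sum (I : Type) (s : seq I) (c g : T -> R) (psi : I -> T -> R)
  (v : I -> R) (w Mg : R) :
  mu.-integrable D (EFin \o c) -> (forall i, measurable_fun D (psi i)) ->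
  measurable_fun D g ->
  (forall i z, D z -> 0 <= psi i z <= 1) ->
  (forall z, D z -> \sum_(i <- s) psi i z = 1) ->
  (forall z, D z -> `|g z| <= Mg) -> 0 <= w ->
  (forall i z, D z -> psi i z * `|g z - v i| <= w * psi i z) ->
  `|\int[mu]_(z in D) (c z * g z) -
    \int[mu]_(z in D) ((\sum_(i <- s) (\int[mu]_(y in D) (c y * psi i y)) /
                         (\int[mu]_(y in D) psi i y) * psi i z) * g z)|
   <= 2 * w * \int[mu]_(z in D) `|c z|.
Proof.
move=> ic mp mg p01 ps1 gM w0 pgv.
have p1 : forall i z, D z -> `|psi i z| <= 1.
  by move=> i z Dz; have /andP[a b] := p01 i z Dz; rewrite ger0_norm.
have icpg : forall i, mu.-integrable D (EFin \o (fun z => c z * psi i z * g z)).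
  move=> i; have := int_cM ic (measurable_funM (mp i) mg) (bnd_mul (p01 i) gM).
  by apply: eq_integrable => // z _ /=; rewrite mulrA.
have ipg : forall i, mu.-integrable D (EFin \o (fun z => psi i z * g z)).
  by move=> i; apply: int_bnd (bnd_mul (p01 i) gM); apply: measurable_funM.
have iacp : forall i, mu.-integrable D (EFin \o (fun z => `|c z| * psi i z)).
  by move=> i; exact: int_cM (integrable_norm ic) (mp i) (p1 i).
set beta := fun i => (\int[mu]_(y in D) (c y * psi i y)) / (\int[mu]_(y in D) psi i y).
rewrite -/(beta _).
have E1 : \int[mu]_(z in D) (c z * g z) =
    \sum_(i <- s) \int[mu]_(z in D) (c z * psi i z * g z).
  rewrite -Rint_sum //; apply: eq_Rintegral => z /[!inE] Dz.
  by rewrite -big_distrl /= -big_distrr /= ps1 // mulr1.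
have E2 : \int[mu]_(z in D) ((\sum_(i <- s) beta i * psi i z) * g z) =
    \sum_(i <- s) (beta i * \int[mu]_(z in D) (psi i z * g z)).
  under [RHS]eq_bigr do rewrite -RintegralZl //.
  rewrite -Rint_sum //; last by move=> i; apply: int_Z.
  apply: eq_Rintegral => z _; rewrite big_distrl /=.
  by apply: eq_bigr => i _; rewrite mulrA.
have E3 : \int[mu]_(z in D) `|c z| =
    \sum_(i <- s) \int[mu]_(z in D) (`|c z| * psi i z).
  rewrite -Rint_sum //; apply: eq_Rintegral => z /[!inE] Dz.
  by rewrite -big_distrr /= ps1 // mulr1.
rewrite E1 E2 E3 -sumrB mulr_sumr.
apply: le_trans (ler_norm_sum _ _ _) _.
apply: ler_sum => i _.
exact: (piece ic (mp i) mg (p01 i) gM w0 (pgv i)).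
Qed.
End core.

Section topo.
Variables (R : realType) (d : nat).
Local Notation T := (Zsp R d).

Lemma open_meas (U : set T) : open U -> measurable (U : set (BorelZ R d)).
Proof. by move=> oU; apply: sub_sigma_algebra. Qed.

Lemma cont_mfun (D : set (BorelZ R d)) (f : T -> R) : measurable D ->
  continuous f -> measurable_fun D (f : BorelZ R d -> R).
Proof.
move=> mD /continuousP cf; apply: (measurability _ (RGenOpens.measurableE R)).
move=> _ [_ [a [b ->] <-]]; apply: measurableI => //; apply: open_meas.
exact/cf/interval_open.
Qed.

Lemma cont_sum (U : topologicalType) (I : Type) (s : seq I) (F : I -> U -> R) x :
  (forall i, {for x, continuous (F i)}) ->
  {for x, continuous (fun y => \sum_(i <- s) F i y)}.
Proof.
move=> cF; rewrite /prop_for /continuous_at; elim: s => [|i s IH].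
  rewrite big_nil (_ : (fun y => _) = cst 0); first exact: cvg_cst.
  by apply/funext => y /=; rewrite big_nil.
rewrite big_cons (_ : (fun y => _) = (F i \+ (fun y => \sum_(j <- s) F j y))).
  apply: cvgD; [exact: cF | exact: IH].
by apply/funext => y /=; rewrite big_cons.
Qed.

Lemma ccomp (A B C : topologicalType) (f : A -> B) (g : B -> C) :
  continuous f -> continuous g -> continuous (g \o f).
Proof. by move=> cf cg x; apply: continuous_comp (cf x) (cg (f x)). Qed.

Lemma cfst (A B : topologicalType) : continuous (@fst A B).
Proof. by move=> [a b]; apply: cvg_fst. Qed.

Lemma csnd (A B : topologicalType) : continuous (@snd A B).
Proof. by move=> [a b]; apply: cvg_snd. Qed.

Lemma dotv_cont : continuous (fun p : 'rV[R]_d * T => dotv p.2.1.1 p.1).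
Proof.
move=> p; rewrite /dotv; apply: cont_sum => i.
apply: cvgM.
- exact: (ccomp (@csnd _ _) (ccomp (@cfst _ _) (ccomp (@cfst _ _) (@coord_continuous R _ _ ord0 i)))).
- exact: (ccomp (@cfst _ _) (@coord_continuous R _ _ ord0 i)).
Qed.

Lemma G_cont (K : R -> R -> R) : continuous (fun st : R * R => K st.1 st.2) ->
  continuous (fun p : 'rV[R]_d * T => K (dotv p.2.1.1 p.1 + p.2.1.2) p.2.2).
Proof.
move=> cK.
have ch : continuous (fun p : 'rV[R]_d * T => (dotv p.2.1.1 p.1 + p.2.1.2, p.2.2)).
  move=> p.
  have h1 : (fun p : 'rV[R]_d * T => dotv p.2.1.1 p.1 + p.2.1.2) @ p -->
      (dotv p.2.1.1 p.1 + p.2.1.2).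
    apply: cvgD; first exact: dotv_cont.
    exact: (ccomp (@csnd _ _) (ccomp (@cfst _ _) (@csnd _ _))).
  have h2 : (fun p : 'rV[R]_d * T => p.2.2) @ p --> p.2.2.
    exact: (ccomp (@csnd _ _) (@csnd _ _)).
  exact: (cvg_pair h1 h2).
exact: (ccomp ch cK).
Qed.

Lemma msupport_meas (rho : {measure set BorelZ R d -> \bar R}) :
  measurable (msupport rho : set (BorelZ R d)).
Proof.
suff oC : open (~` (msupport rho : set T)).
  by rewrite -[msupport rho]setCK; apply: measurableC; apply: open_meas.
rewrite openE => z /= nz.
have [U [oU Uz nU]] : exists U : set T, [/\ open U, U z & ~ (0 < rho U)%E].
  apply: contrapT => H; apply: nz => U oU Uz; apply: contrapT => nU.
  by apply: H; exists U.
apply: (filterS _ (open_nbhs_nbhs (conj oU Uz))) => y Uy Sy.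
by apply: nU; apply: Sy.
Qed.


Lemma tube (X : set 'rV[R]_d) (Gf : 'rV[R]_d * T -> R) : compact X -> continuous Gf ->
  forall (z0 : T) (w : R), 0 < w ->
  exists2 r, 0 < r & forall z, ball z0 r z -> forall x, X x -> `|Gf (x, z) - Gf (x, z0)| < w.
Proof.
move=> cX cG z0 w w0.
have : \forall z \near z0, X `<=` (fun x => `|Gf (x, z) - Gf (x, z0)| < w).
  apply: ((compact_near_coveringP X).1 cX T (nbhs z0) (fun z x => `|Gf (x, z) - Gf (x, z0)| < w) _).
  move=> x Xx.
  have w2 : 0 < w / 2 by rewrite divr_gt0.
  have /cvgrPdist_lt/(_ _ w2) := cG (x, z0).
  case => -[A B] /= [nA nB] AB.
  exists (A, B) => // -[x' z] /= [Ax' Bz].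
  have h1 := AB (x', z) (conj Ax' Bz).
  have h2 := AB (x', z0) (conj Ax' (nbhs_singleton nB)).
  rewrite /= in h1 h2.
  rewrite (_ : Gf (x', z) - Gf (x', z0) = (Gf (x, z0) - Gf (x', z0)) - (Gf (x, z0) - Gf (x', z))); last by ring.
  apply: le_lt_trans (ler_normB _ _) _.
  lra.
move=> /nbhs_ballP [r r0 H]; exists r => // z zr x Xx.
Qed.

End topo.

Lemma K_bound (R : realType) (dO : measure_display) (Omega : measurableType dO)
  (P : probability Omega R) (k : Omega -> R -> R -> R) (K : R -> R -> R) :
  measurable_fun setT (fun p : Omega * (R * R) => k p.1 p.2.1 p.2.2) ->
  (forall s t : R, {ae P, forall w, `|k w s t| <= 1}) ->
  (forall s t : R, (K s t)%:E = (\int[P]_w (k w s t)%:E)%E) ->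
  forall s t, `|K s t| <= 1.
Proof.
move=> mk kb KE s t.
have mks : measurable_fun setT (fun w => k w s t).
  pose g := fun w : Omega => (w, (s, t)).
  have mg : measurable_fun setT g by apply: measurable_fun_pair => //; exact: measurable_cst.
  exact: (measurableT_comp mk mg).
have : (`|(K s t)%:E| <= 1)%E; last by rewrite /= lee_fin.
rewrite KE; apply: le_trans (le_abse_integral _ _ _) _ => //.
  exact/measurable_EFinP.
apply: (@le_trans _ _ (\int[P]_w (cst 1%E) w)%E).
  apply: ae_ge0_le_integral => //.
  - apply: measurableT_comp => //; exact/measurable_EFinP.
  - apply: (filterS _ (kb s t)) => w /= h _; by rewrite lee_fin.
by rewrite integral_cst // mul1e probability_le1.
Qed.

Lemma L2_int (R : realType) (d : nat) (rho : probability (BorelZ R d) R)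
  (c : BorelZ R d -> R) (D : set (BorelZ R d)) :
  measurable D -> L2 rho c -> rho.-integrable D (EFin \o c).
Proof.
move=> mD [mc ic2]; apply/integrableP; split.
  by apply/measurable_EFinP; exact: (measurable_funS measurableT (@subsetT _ D) mc).
have mc2 : measurable_fun setT (fun z => ((c z) ^+ 2 + 1)%:E).
  by apply/measurable_EFinP; apply: measurable_funD => //; apply: measurable_funX.
apply: (@le_lt_trans _ _ (\int[rho]_(z in D) ((c z) ^+ 2 + 1)%:E)%E).
  apply: ge0_le_integral => //.
  - apply: measurableT_comp => //; apply/measurable_EFinP; exact: (measurable_funS measurableT (@subsetT _ D) mc).
  - exact: (measurable_funS measurableT (@subsetT _ D) mc2).
  - move=> z _ /=; rewrite lee_fin -real_normK ?num_real //.
    have := normr_ge0 (c z); set a := `|c z|; nra.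
apply: (@le_lt_trans _ _ (\int[rho]_z ((c z) ^+ 2 + 1)%:E)%E).
  apply: ge0_subset_integral => //.
  by move=> z _; rewrite lee_fin addr_ge0 // sqr_ge0.
under eq_integral do rewrite EFinD.
rewrite ge0_integralD //; try (by move=> z _; rewrite lee_fin sqr_ge0);
  try (by apply/measurable_EFinP; apply: measurable_funX); try exact: measurable_cst.
rewrite integral_cst // mul1e.
apply: lte_add_pinfty => //.
by apply: (le_lt_trans (probability_le1 _ _)) => //; rewrite ltry.
Qed.


Lemma fin_cover (R : realType) (M : pseudoMetricType R) (A : set M) (rh : M -> R) :
  compact A -> (forall z, 0 < rh z) ->
  exists s : seq M, forall z, A z -> exists2 j, j \in s & ball j (rh j) z.
Proof.
move=> cA rh0.
pose F := filter_from (setT : set (seq M)) (fun l => [set i : seq M | {subset l <= i}]).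
have FF : Filter F.
  apply: filter_from_filter; first by exists [::].
  move=> i j _ _; exists (i ++ j) => // l /= H; split => y yi; apply: H;
    by rewrite mem_cat yi ?orbT.
have := (compact_near_coveringP A).1 cA (seq M) F
  (fun i z => exists2 j, j \in i & ball j (rh j) z) FF.
case.
  move=> x Ax; exists (ball x (rh x), [set i : seq M | {subset [:: x] <= i}]).
    split; first exact: nbhsx_ballx.
    by exists [:: x].
  move=> [x' i] /= [bx xi]; exists x => //; apply: xi; exact: mem_head.
move=> l _ H; exists l => z Az; apply: (H l) => //.
Qed.

Lemma sum_ge_term (R : realType) (I : eqType) (s : seq I) (F : I -> R) j :
  (forall i, 0 <= F i) -> j \in s -> F j <= \sum_(i <- s) F i.
Proof.
move=> F0; elim: s => // a s IH; rewrite inE big_cons => /orP[/eqP->|js].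
  by rewrite lerDl sumr_ge0.
by apply: le_trans (IH js) _; rewrite lerDr.
Qed.

Unset Implicit Arguments.
Set Strict Implicit.

Theorem lemma10 (R : realType) (dO : measure_display) (Omega : measurableType dO)
  (P : probability Omega R) (k : Omega -> R -> R -> R)
  (K : R -> R -> R) (d : nat)
  (rho : probability (BorelZ R d) R) :
  measurable_fun setT (fun p : Omega * (R * R) => k p.1 p.2.1 p.2.2) ->
  (forall s t : R, {ae P, forall w, `|k w s t| <= 1}) ->
  (forall s t : R, (K s t)%:E = (\int[P]_w (k w s t)%:E)%E) ->
  continuous (fun st : R * R => K st.1 st.2) ->
  pos_def_kernel K ->
  compact (msupport rho) ->
  forall X : set 'rV[R]_d, compact X ->
  forall c : BorelZ R d -> R, L2 rho c ->
  forall eps : R, 0 < eps ->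
  exists c' : BorelZ R d -> R,
    {within msupport rho, continuous (c' : Zsp R d -> R)} /\
    forall x, X x -> `|f_c rho K c x - f_c rho K c' x| < eps.
Proof.
move=> mk kb KE cK _ cS X cX c Lc eps eps0.
set S := msupport rho.
have mS : measurable (S : set (BorelZ R d)) := msupport_meas rho.
have muS : (rho S < +oo)%E.
  by apply: (le_lt_trans (probability_le1 _ _)) => //; rewrite ltry.
have Kb := K_bound mk kb KE.
have ic : rho.-integrable S (EFin \o c) := L2_int mS Lc.
set M := \int[rho]_(z in S) `|c z|.
have M0 : 0 <= M by apply: Rintegral_ge0.
pose w := eps / (2 * (M + 1)).
have w0 : 0 < w by rewrite /w divr_gt0 // mulr_gt0 // ltr_wpDl.
pose Gf := fun p : 'rV[R]_d * Zsp R d => K (dotv p.2.1.1 p.1 + p.2.1.2) p.2.2.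
have cG : continuous Gf := G_cont cK.
have tb : forall z0 : Zsp R d, exists r, 0 < r /\
    forall z, ball z0 r z -> forall x, X x -> `|Gf (x, z) - Gf (x, z0)| < w.
  by move=> z0; have [r r0 H] := tube cX cG z0 w0; exists r.
have [r rP] := choice tb.
pose rh z := r z / 2.
have rh0 z : 0 < rh z by rewrite /rh divr_gt0 // (rP z).1.
have [s covs] := fin_cover cS rh0.
pose phi i z := Num.min 1 (Num.max 0 (2 - `|i - z| / rh i)).
pose Phi z := \sum_(i <- s) phi i z.
pose psi i z := phi i z / Num.max 1 (Phi z).
have phi0 i z : 0 <= phi i z by rewrite /phi le_min ler01 le_max lexx.
have phi1 i z : phi i z <= 1 by rewrite /phi ge_min lexx.
have Phi0 z : 0 <= Phi z by rewrite sumr_ge0.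
have m1 z : 1 <= Num.max 1 (Phi z) by rewrite le_max lexx.
have m0 z : 0 < Num.max 1 (Phi z) by apply: lt_le_trans (m1 z).
have psi01 i z : 0 <= psi i z <= 1.
  apply/andP; split; first by rewrite divr_ge0 // ltW.
  by rewrite ler_pdivrMr // mul1r; apply: le_trans (phi1 i z) (m1 z).
have cphi i : continuous (phi i).
  move=> z.
  have ha : {for z, continuous (fun y : Zsp R d => 2 - `|i - y| / rh i)}.
    apply: cvgB; first exact: cvg_cst.
    apply: cvgM; last exact: cvg_cst.
    by apply: cvg_norm; apply: cvgB; [exact: cvg_cst | exact: cvg_id].
  have hb : {for z, continuous (fun y : Zsp R d => Num.max 0 (2 - `|i - y| / rh i))}.
    have := continuous_max (f := cst 0) (x := z) (cvg_cst _) ha; exact.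
  have := continuous_min (f := cst 1) (x := z) (cvg_cst _) hb; exact.
have cpsi i : continuous (psi i).
  move=> z; apply: cvgM; first exact: cphi.
  apply: cvgV; first by rewrite gt_eqF.
  have := continuous_max (f := cst 1) (x := z) (cvg_cst _) (cont_sum (fun j => cphi j z)).
  exact.
have sum1 z : S z -> \sum_(i <- s) psi i z = 1.
  move=> Sz; have [j js bj] := covs z Sz.
  rewrite -ball_normE /= in bj.
  have pj : 1 <= phi j z.
    rewrite /phi le_min lexx /= le_max; apply/orP; right.
    have : `|j - z| / rh j < 1 by rewrite ltr_pdivrMr // mul1r.
    lra.
  have Phi1 : 1 <= Phi z by exact: (le_trans pj (@sum_ge_term R _ s (fun i => phi i z) j (phi0^~ z) js)).
  rewrite /psi -mulr_suml -/(Phi z) max_r // divff //.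
  by rewrite gt_eqF // (lt_le_trans ltr01).
have pgv x : X x -> forall i z, psi i z * `|Gf (x, z) - Gf (x, i)| <= w * psi i z.
  move=> Xx i z.
  have [->|nz] := eqVneq (psi i z) 0; first by rewrite mul0r mulr0.
  have : 0 < phi i z.
    rewrite lt_neqAle phi0 andbT; apply: contra nz => /eqP h.
    by rewrite /psi -h mul0r.
  rewrite /phi lt_min ltr01 /= lt_max ltxx /= => h.
  have bz : ball i (r i) z.
    rewrite -ball_normE /=.
    have : `|i - z| / rh i < 2 by lra.
    by rewrite ltr_pdivrMr // (_ : 2 * rh i = r i) // /rh; field.
  have := (rP i).2 z bz x Xx.
  move=> /ltW H; rewrite mulrC ler_wpM2r //; by case/andP: (psi01 i z).
pose c' := fun z : BorelZ R d => \sum_(i <- s)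
  (\int[rho]_(y in S) (c y * psi i y)) / (\int[rho]_(y in S) psi i y) * psi i z.
exists c'; split.
  apply: continuous_subspaceT => z.
  have := cont_sum (s := s) (F := fun i y => (\int[rho]_(y in S) (c y * psi i y)) /
     (\int[rho]_(y in S) psi i y) * psi i y) (x := z)
     .
  apply => i; apply: cvgM; [exact: cvg_cst | exact: cpsi].
move=> x Xx.
have cg : continuous (fun z : Zsp R d => Gf (x, z)).
  move=> z; apply: (continuous_comp (f := fun z : Zsp R d => (x, z))); last exact: cG.
  have h1 : (fun _ : Zsp R d => x) @ z --> x by exact: cvg_cst.
  have h2 : (fun y : Zsp R d => y) @ z --> z by exact: cvg_id.
  exact: (cvg_pair h1 h2).
have H : `|f_c rho K c x - f_c rho K c' x| <= 2 * w * M.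
  exact: (@core_sum _ _ R rho S mS muS _ s c (fun z => Gf (x, z)) psi
     (fun i => Gf (x, i)) w 1 ic (fun i => cont_mfun mS (cpsi i)) (cont_mfun mS cg)
     (fun i z _ => psi01 i z) sum1 (fun z _ => Kb _ _) (ltW w0)
     (fun i z _ => pgv x Xx i z)).
apply: le_lt_trans H _.
have -> : 2 * w * M = eps * (M / (M + 1)).
  rewrite /w; field; rewrite gt_eqF // ltr_wpDl //.
rewrite -[ltRHS]mulr1 ltr_pM2l // ltr_pdivrMr ?mul1r ?ltrDl //.
by rewrite ltr_wpDl.
Qed.
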